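(* Let $q$ be a prime power, $m$ a positive integer, and $n=q^m-1$. Then every $q$-ary cyclotomic coset $C_x=\{xq^\ell\bmod n\mid \ell\in\mathbf{Z}\}$ with $1\le x<q^{\lceil m/2\rceil}+1$ has cardinality $|C_x|=m$. *)

(* Defs.v *)
From mathcomp Require Import all_boot.
Set Implicit Arguments. Unset Strict Implicit. Unset Printing Implicit Defensive.

Definition is_prime_power (q : nat) : Prop :=
  exists p k : nat, [/\ prime p, 0 < k & q = p ^ k].

(* Membership in the q-ary cyclotomic coset C_x = { x q^l mod n | l in Z }.  For l = -j < 0, x q^{-j} mod n
   is the unique residue y < n with y * q^j = x (mod n) (q is a unit mod n
   in the intended setting n = q^m - 1). *)
Definition in_cyc_coset (q n x y : nat) : Prop :=
  (exists l : nat, y = (x * q ^ l) %% n) \/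
  (exists j : nat, y < n /\ y * q ^ j = x %[mod n]).

Definition has_card (P : nat -> Prop) (k : nat) : Prop :=
  exists s : seq nat, [/\ uniq s, size s = k & forall y, P y <-> y \in s].

(* Main.v *)
Require Import Defs.
From mathcomp Require Import all_boot.
From mathcomp Require Import zify.
Set Warnings "-all".

Lemma aux m a b : m./2 < b - a -> b < m -> a < b -> 0 < m - (b - a) /\ m - (b - a) <= m./2.
Proof. have := odd_double_half m; lia. Qed.

Section S.
Variables (q m : nat).
Hypothesis q2 : 1 < q.
Hypothesis m0 : 0 < m.
Let n := q ^ m - 1.

Lemma qm1 : q ^ m = 1 %[mod n].
Proof.
have h : 0 < q ^ m by rewrite expn_gt0 ltnW.
by rewrite -{1}(subnK h) -modnDml modnn add0n.
Qed.

Lemma expmod l : q ^ l = q ^ (l %% m) %[mod n].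
Proof.
rewrite {1}(divn_eq l m) expnD (mulnC (l %/ m)) expnM -modnMml.
by rewrite -(modnXm _ _ (q ^ m)) qm1 modnXm exp1n modnMml mul1n.
Qed.

Lemma fix_contra x j : 1 <= x -> x <= q ^ uphalf m -> 0 < j -> j <= m./2 ->
  x * q ^ j != x %[mod n].
Proof.
move=> x1 xq j0 jm; apply/negP.
have hj : x <= x * q ^ j by rewrite leq_pmulr // expn_gt0 ltnW.
rewrite eqn_mod_dvd //.
move=> /dvdn_leq.
have qj : 1 < q ^ j by rewrite -(exp1n j) ltn_exp2r.
have pos : 0 < x * q ^ j - x.
  rewrite subn_gt0 -{1}(muln1 x) ltn_pmul2l //.
move/(_ pos).
have c1 : 1 < q ^ uphalf m.
  have u0 : 0 < uphalf m by case: m m0.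
  by rewrite -(exp1n (uphalf m)) ltn_exp2r.
have e : q ^ uphalf m * q ^ j <= q ^ m.
  rewrite -expnD leq_exp2l //; move: jm; rewrite uphalf_half.
  have := odd_double_half m; lia.
have : x * q ^ j - x <= q ^ uphalf m * q ^ j - q ^ uphalf m.
  have := leq_mul2r (q ^ j - 1) x (q ^ uphalf m); rewrite xq orbT mulnBr mulnBr !muln1.
  by move->.
rewrite /n; nia.
Qed.

Lemma mulmod a b c : a = b %[mod n] -> a * c = b * c %[mod n].
Proof. by move=> h; rewrite -modnMml h modnMml. Qed.

Lemma xqm x : x * q ^ m = x %[mod n].
Proof. by rewrite -modnMmr qm1 modnMmr muln1. Qed.

Lemma inj_lt x a b : 1 <= x -> x <= q ^ uphalf m -> a < b -> b < m ->
  x * q ^ a != x * q ^ b %[mod n].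
Proof.
move=> x1 xq ab bm; apply/negP => /eqP h.
have ba : a <= b by apply: ltnW.
have bm' : b <= m by apply: ltnW.
have h1 : x * q ^ (m - (b - a)) = x %[mod n].
  have := mulmod _ _ (q ^ (m - b)) h; rewrite -!mulnA -!expnD.
  rewrite subnKC // addnBA // subnBA // addnC => ->.
  by rewrite xqm.
have h2 : x * q ^ (b - a) = x %[mod n].
  have := mulmod _ _ (q ^ (b - a)) h1; rewrite -!mulnA -!expnD.
  rewrite subnK ?leq_subr // ?leq_subLR; last by rewrite (leq_trans bm') ?leq_addl.
  by rewrite xqm => <-.
have d0 : 0 < b - a by rewrite subn_gt0.
case: (leqP (b - a) m./2) => hd.
  by have := fix_contra _ _ x1 xq d0 hd; rewrite h2 eqxx.
have [e0 e1] := aux _ _ _ hd bm ab.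
by have := fix_contra _ _ x1 xq e0 e1; rewrite h1 eqxx.
Qed.
End S.

Theorem mainTheorem4 (q m : nat) :
  is_prime_power q -> 0 < m ->
  forall x : nat, 1 <= x -> x < q ^ (uphalf m) + 1 ->
  has_card (in_cyc_coset q (q ^ m - 1) x) m.
Proof.
move=> [p [k [pp k0 qe]]] m0 x x1 xlt.
have q2 : 1 < q by rewrite qe -(exp1n k) ltn_exp2r // prime_gt1.
have xq : x <= q ^ uphalf m by rewrite addn1 ltnS in xlt.
exists [seq (x * q ^ l) %% (q ^ m - 1) | l <- iota 0 m]; split.
- rewrite map_inj_in_uniq ?iota_uniq //.
  move=> a b; rewrite !mem_iota !add0n => /andP[_ am] /andP[_ bm] /eqP e.
  case: (ltngtP a b) => // hab.
    by have := inj_lt _ _ q2 m0 _ _ _ x1 xq hab bm; move/eqP: e => e /eqP.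
  by have := inj_lt _ _ q2 m0 _ _ _ x1 xq hab am; move/eqP: e => ->; rewrite eqxx.
- by rewrite size_map size_iota.
move=> y; split; last first.
  by move/mapP => [l _ ->]; left; exists l.
have key : (exists l, y = (x * q ^ l) %% (q ^ m - 1)) ->
    y \in [seq (x * q ^ l) %% (q ^ m - 1) | l <- iota 0 m].
  move=> [l ->]; apply/mapP; exists (l %% m).
    by rewrite mem_iota add0n ltn_pmod.
  by rewrite -modnMmr (expmod _ _ q2 l) modnMmr.
case=> [//|[j [yn hj]]]; apply: key; exists ((m - 1) * j).
have e : m * j = j + (m - 1) * j by rewrite -{1}(subnK m0) mulnDl mul1n addnC.
have := mulmod _ _ _ _ (q ^ ((m - 1) * j)) hj.
rewrite -mulnA -expnD -e mulnC expnM -modnMml -(modnXm _ _ (q ^ m)) (qm1 _ _ q2).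
by rewrite modnXm exp1n modnMml mul1n modn_small.
Qed.
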